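(* Let $(G,S)$ be an orientable ribbon graph, let $\Sigma$ be the closed surface obtained from $S$ by attaching a disk along each boundary component, and let $g$ be the genus of $\Sigma$. Then $$BR_{G,S}(X,Y,Z)=Y^{g}\,P_{G,\Sigma}(X-1,\,Y,\,YZ^2,\,Y^{-1}).$$
   Context: An orientable ribbon graph $(G,S)$ is a graph $G$ embedded in a compact orientable surface with boundary $S$ such that the inclusion is a homotopy equivalence; $S$ is viewed as a union of disks (neighborhoods of vertices) and bands (neighborhoods of edges). A spanning subgraph $H\subset G$ inherits a ribbon structure: its surface is the union of all vertex disks and the bands of the edges of $H$. The Bollobás–Riordan polynomial is $$BR_{G,S}(X,Y,Z)=\sum_{H\subset G}(X-1)^{r(G)-r(H)}\,Y^{n(H)}\,Z^{c(H)-bc(H)+n(H)},$$ where $c(H)$ is the number of components of $H$, $r(H)=v(G)-c(H)$, $n(H)=e(H)-r(H)$ (with $v,e$ numbers of vertices and edges), and $bc(H)$ is the number of boundary components of the surface of the ribbon subgraph $H$. For a graph $G$ in a closed orientable surface $\Sigma$ and a spanning subgraph $H$: $k(H)=\dim\ker\big(H_1(H;\mathbb R)\to H_1(\Sigma;\mathbb R)\big)$; $s(H)$ is twice the genus of a regular neighborhood $\mathcal H$ of $H$ in $\Sigma$ (genus of a surface with boundary meaning the genus after capping boundary circles with disks); $s^{\perp}(H)$ is twice the genus of $\Sigma\smallsetminus\mathcal H$; and $$P_{G,\Sigma}(X,Y,A,B)=\sum_{H\subset G} X^{c(H)-c(G)}\,Y^{k(H)}\,A^{s(H)/2}\,B^{s^{\perp}(H)/2}.$$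 *)

(* Defs.v *)
(* Orientable ribbon graphs are modelled as combinatorial
   maps (rotation systems) with explicit vertex set (to allow isolated
   vertices). *)
From HB Require Import structures.
From mathcomp Require Import all_boot all_order all_algebra all_fingroup.
Set Implicit Arguments. Unset Strict Implicit. Unset Printing Implicit Defensive.
Import Order.TTheory GRing.Theory Num.Theory.

(* A ribbon graph: vertices V, darts (half-edges) D, [rg_vert d] the vertex
   at which d sits, [rg_rot] the cyclic order of darts around each vertex
   (orientation of the vertex disks), [rg_inv] the fixed-point-free involution
   pairing the two darts of each edge (band). *)
Record ribbon_graph := RibbonGraph {
  rg_V : finType;
  rg_D : finType;
  rg_vert : rg_D -> rg_V;
  rg_rot : {perm rg_D};
  rg_inv : {perm rg_D};
  rg_inv_invol : forall d, rg_inv (rg_inv d) = d;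
  rg_inv_nofix : forall d, rg_inv d != d;
  rg_rot_vert : forall d, rg_vert (rg_rot d) = rg_vert d;
  rg_rot_trans : forall d d', rg_vert d = rg_vert d' -> fconnect rg_rot d d'
}.

Definition ncomp (T : finType) (e : rel T) (P : {pred T}) : nat :=
  #|[set [set y | connect e x y] | x in P]|.

Section RibbonDefs.
Variable G : ribbon_graph.
Local Notation V := (rg_V G).
Local Notation D := (rg_D G).
Local Notation vert := (@rg_vert G).
Local Notation s := (@rg_rot G).
Local Notation a := (@rg_inv G).

(* spanning subgraphs H are given by their dart sets A, closed under a *)
Definition is_subgraph (A : {set D}) : bool := a @: A == A.

Definition rg_phi (d : D) : D := s (a d).

Definition nV : nat := #|V|.
Definition nE (A : {set D}) : nat := #|[set [set d; a d] | d in A]|.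
Definition vrel (A : {set D}) : rel V :=
  fun x y => [exists d, [&& d \in A, vert d == x & vert (a d) == y]].
Definition nC (A : {set D}) : nat := ncomp (vrel A) predT.

(* ribbon subgraph structure: induced rotation at vertices, boundary walks *)
Definition nextA (A : {set D}) (d : D) : D :=
  iter (find (fun k => iter k.+1 s d \in A) (iota 0 #|D|)).+1 s d.
Definition phiA (A : {set D}) (d : D) : D := nextA A (a d).
(* vertices not incident to any edge of H (each contributes one boundary
   circle, the boundary of its vertex disk) *)
Definition n_isol (A : {set D}) : nat :=
  #|[set x : V | [forall d in A, vert d != x]]|.
Definition bc (A : {set D}) : nat := ncomp (frel (phiA A)) (mem A) + n_isol A.

Definition rk (A : {set D}) : int := (nV%:Z - (nC A)%:Z)%R.
Definition nul (A : {set D}) : int := ((nE A)%:Z - rk A)%R.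

(* s(H) = twice the genus of the capped surface of the ribbon subgraph H,
   via Euler characteristic: chi = v - e(H) = sum_i (2 - 2 g_i - b_i) *)
Definition sH (A : {set D}) : int :=
  (2 * (nC A)%:Z - nV%:Z + (nE A)%:Z - (bc A)%:Z)%R.

Definition genus_Sigma : int := (sH [set: D] %/ 2)%Z.

(* s^perp(H): twice the genus of Sigma \ (regular nbhd of H).  The complement
   is the union of the capping disks of Sigma (one per boundary component of
   S: the faces = phi-orbits, plus one cap for each isolated vertex of G)
   joined by the bands of the edges not in H; its boundary is the boundary of
   the neighbourhood of H (bc(H) circles). *)
Definition drel (A : {set D}) : rel D :=
  fun d d' => fconnect rg_phi d d' || ((d \notin A) && (d' == a d)).
Definition nCperp (A : {set D}) : nat := ncomp (drel A) predT + n_isol [set: D].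
Definition sperp (A : {set D}) : int :=
  (2 * (nCperp A)%:Z - (bc [set: D])%:Z + (nE [set: D])%:Z - (nE A)%:Z
    - (bc A)%:Z)%R.

(* k(H) = dim ker (H_1(H) -> H_1(Sigma)), computed in cellular homology
   (rational coefficients; same dimension as over R).  1-chains are
   functions c on darts with c (a d) = - c d (c d = coefficient of the edge
   oriented from vert d to vert (a d)). *)
Local Open Scope ring_scope.
Definition dv (i : 'I_#|D|) : D := enum_val i.
(* rows: boundaries of the 2-cells (faces) *)
Definition Bmx : 'M[rat]_#|D| :=
  \matrix_(i, j) ((fconnect rg_phi (dv i) (dv j))%:R
                  - (fconnect rg_phi (dv i) (a (dv j)))%:R).
(* constraints: antisymmetry, support in H, zero boundary at every vertex *)
Definition Psi1 : 'M[rat]_(#|D|, #|D|) :=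
  \matrix_(i, j) ((dv i == dv j)%:R + (dv i == a (dv j))%:R).
Definition Psi2 (A : {set D}) : 'M[rat]_(#|D|, #|D|) :=
  \matrix_(i, j) ((dv i == dv j) && (dv j \notin A))%:R.
Definition Psi3 : 'M[rat]_(#|D|, #|V|) :=
  \matrix_(i, j) (vert (dv i) == enum_val j)%:R.
Definition Z1 (A : {set D}) : 'M[rat]_#|D| :=
  kermx (row_mx Psi1 (row_mx (Psi2 A) Psi3)).
Definition kH (A : {set D}) : nat := \rank (Z1 A :&: Bmx)%MS.

Definition BR (R : unitRingType) (X Y Z : R) : R :=
  \sum_(A : {set D} | is_subgraph A)
     (X - 1) ^ (rk [set: D] - rk A)%R * Y ^ (nul A)
       * Z ^ ((nC A)%:Z - (bc A)%:Z + nul A)%R.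

Definition Ppoly (R : unitRingType) (X Y AA BB : R) : R :=
  \sum_(A : {set D} | is_subgraph A)
     X ^ ((nC A)%:Z - (nC [set: D])%:Z)%R * Y ^+ kH A
       * AA ^ (sH A %/ 2)%Z * BB ^ (sperp A %/ 2)%Z.

End RibbonDefs.

(* Main.v *)
Require Import Defs.
From HB Require Import structures.
From mathcomp Require Import all_boot all_order all_algebra all_fingroup zify ring.
Set Implicit Arguments. Unset Strict Implicit. Unset Printing Implicit Defensive.
Import Order.TTheory GRing.Theory Num.Theory.

Lemma card_imset_ker (T U W : finType) (f : T -> U) (g : T -> W) (P : {pred T}) :
  {in P &, forall x y, (f x == f y) = (g x == g y)} ->
  #|[set f x | x in P]| = #|[set g x | x in P]|.
Proof.
move=> H.
case: (pickP P) => [x0 Px0 | P0]; last first.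
  have e: forall (V : finType) (h : T -> V), [set h x | x in P] = set0.
    move=> V h; apply/setP => v; rewrite inE; apply/imsetP => -[x Px _].
    by move: Px; rewrite unfold_in P0.
  by rewrite (e _ f) (e _ g) !cards0.
pose h z := f (odflt x0 [pick x in P | g x == z]).
have hg: {in P, forall x, h (g x) = f x}.
  move=> x Px; rewrite /h; case: pickP => [y /andP[Py gy]|/(_ x)] /=.
    by apply/eqP; rewrite H.
  by rewrite Px eqxx.
have ->: [set f x | x in P] = h @: [set g x | x in P].
  by rewrite -imset_comp; apply: eq_in_imset => x Px /=; rewrite hg.
apply: card_in_imset => _ _ /imsetP[x1 P1 ->] /imsetP[x2 P2 ->].
by rewrite !hg // => /eqP; rewrite H // => /eqP.
Qed.

Lemma connect_map (T U : finType) (h : T -> U) (e : rel T) (e' : rel U) :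
  (forall x y, e x y -> connect e' (h x) (h y)) ->
  forall x y, connect e x y -> connect e' (h x) (h y).
Proof.
move=> He x y /connectP[p]; elim: p x => [|z p IH] x /=.
  by move=> _ ->.
move=> /andP[exz pz] ey; exact: connect_trans (He _ _ exz) (IH z pz ey).
Qed.

Lemma clsE (T : finType) (r : rel T) (rs : connect_sym r) x y :
  ([set z | connect r x z] == [set z | connect r y z]) = connect r x y.
Proof.
apply/eqP/idP => [e | cxy].
  have : y \in [set z | connect r y z] by rewrite inE connect0.
  by rewrite -e inE.
apply/setP => z; rewrite !inE; apply/idP/idP => H.
  by apply: connect_trans H; rewrite rs.
exact: connect_trans cxy H.
Qed.

Section MX.
Variable G : ribbon_graph.
Local Notation D := (rg_D G).
Local Notation V := (rg_V G).
Local Notation a := (@rg_inv G).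
Local Notation s := (@rg_rot G).
Local Open Scope ring_scope.

Lemma sumD (F : D -> rat) : \sum_(j < #|D|) F (dv j) = \sum_(d : D) F d.
Proof. by rewrite /dv -big_enum_val. Qed.

Lemma sum_pick (F : D -> rat) x : \sum_(d : D) F d * (d == x)%:R = F x.
Proof.
rewrite (bigD1 x) //= eqxx mulr1 big1 ?addr0 // => d /negbTE ->; by rewrite mulr0.
Qed.

Definition vx (u : 'rV[rat]_#|D|) (d : D) : rat := u 0 (enum_rank d).
Lemma vxE u j : vx u (dv j) = u 0 j.
Proof. by rewrite /vx /dv enum_valK. Qed.

Definition cls (r : rel D) x := [set y | connect r x y].
Definition Cls (r : rel D) : {set {set D}} := [set cls r x | x in predT].
Definition Smx r : 'M[rat]_(#|Cls r|, #|D|) :=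
  \matrix_(k < #|Cls r|, j < #|D|) (dv j \in (enum_val k : {set D}))%:R.

Lemma cls_eq r (rs : connect_sym r) x y : y \in cls r x -> cls r x = cls r y.
Proof.
rewrite inE => cxy; apply/setP => z; rewrite !inE; apply/idP/idP => H.
  by apply: connect_trans H; rewrite rs.
exact: connect_trans cxy H.
Qed.

Lemma enum_cls r (k : 'I_#|Cls r|) : exists x, enum_val k = cls r x.
Proof. by have /imsetP[x _ ->] := enum_valP k; exists x. Qed.

Lemma mem_enum_cls r (rs : connect_sym r) (k : 'I_#|Cls r|) x :
  (x \in enum_val k) = (enum_val k == cls r x).
Proof.
have [z ->] := enum_cls k; apply/idP/eqP => [H|->]; first exact: cls_eq.
by rewrite inE connect0.
Qed.

Lemma Smx_rank r (rs : connect_sym r) : \rank (Smx r) = #|Cls r|.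
Proof.
have [rep Hrep] := fin_all_exists (@enum_cls r).
apply/eqP; apply/row_freeP.
exists (\matrix_(j < #|D|, k < #|Cls r|) ((dv j == rep k)%:R : rat)).
apply/matrixP => k k'; rewrite !mxE.
transitivity (\sum_(d : D) (d \in (enum_val k : {set D}))%:R * (d == rep k')%:R :> rat).
  rewrite -(sumD (fun d => (d \in (enum_val k : {set D}))%:R * (d == rep k')%:R : rat)).
  apply: eq_bigr => j _; rewrite !mxE //.
rewrite sum_pick mem_enum_cls // -Hrep (inj_eq enum_val_inj).
by [].
Qed.

Lemma const_connect (r : rel D) (f : D -> rat) :
  (forall x y, r x y -> f x = f y) -> forall x y, connect r x y -> f x = f y.
Proof.
move=> H x y /connectP[p]; elim: p x => [|z p IH] x /=; first by move=> _ ->.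
by move=> /andP[rxz pz] ey; rewrite (H _ _ rxz); exact: IH.
Qed.

Lemma Smx_sub r (rs : connect_sym r) (u : 'rV[rat]_#|D|) :
  (u <= Smx r)%MS <-> (forall x y, r x y -> vx u x = vx u y).
Proof.
split.
  move/submxP=> [c ->] x y rxy; rewrite /vx !mxE; apply: eq_bigr => k _.
  rewrite !mxE /dv !enum_rankK !mem_enum_cls //.
  suff ->: cls r x = cls r y by [].
  by apply: cls_eq => //; rewrite inE connect1.
move=> H; have Hc := const_connect H.
have [rep Hrep] := fin_all_exists (@enum_cls r).
apply/submxP; exists (\row_k vx u (rep k)); apply/rowP => j; rewrite !mxE.
have x0A : cls r (dv j) \in Cls r by apply: imset_f.
pose k0 := enum_rank_in x0A (cls r (dv j)).
have ek0 : enum_val k0 = cls r (dv j) by rewrite /k0 enum_rankK_in.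
rewrite (bigD1 k0) //= big1 ?addr0.
  rewrite !mxE mem_enum_cls // ek0 eqxx mulr1 -vxE; apply: Hc.
  have : dv j \in cls r (dv j) by rewrite inE connect0.
  by rewrite -ek0 Hrep inE rs.
move=> k nk; rewrite !mxE mem_enum_cls // -ek0 (inj_eq enum_val_inj).
by rewrite (negbTE nk) mulr0.
Qed.

Definition Tm : 'M[rat]_#|D| :=
  \matrix_(j < #|D|, k < #|D|) ((dv k == dv j)%:R - (dv k == a (dv j))%:R).
Definition ind (K : {set D}) : 'rV[rat]_#|D| := \row_j (dv j \in K)%:R.

Lemma eqa (d e : D) : (d == a e) = (e == a d).
Proof. by apply/eqP/eqP => ->; rewrite rg_inv_invol. Qed.

Lemma vxT x d : vx (x *m Tm) d = vx x d - vx x (a d).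
Proof.
rewrite /vx !mxE.
transitivity (\sum_(e : D) vx x e * ((d == e)%:R - (d == a e)%:R)).
  rewrite -(sumD (fun e => vx x e * ((d == e)%:R - (d == a e)%:R))).
  by apply: eq_bigr => j _; rewrite vxE !mxE /dv enum_rankK.
under eq_bigr => e _ do rewrite mulrBr (eq_sym d e) eqa.
by rewrite sumrB !sum_pick.
Qed.

Lemma vx_ind K d : vx (ind K) d = (d \in K)%:R.
Proof. by rewrite /vx mxE /dv enum_rankK. Qed.

Lemma rowBmx i : row i (Bmx G) = ind (cls (frel (@rg_phi G)) (dv i)) *m Tm.
Proof.
apply/rowP => k; rewrite -[RHS]vxE vxT !vx_ind !inE !mxE.
by [].
Qed.

Lemma rowSmx r k : row k (Smx r) = ind (enum_val k).
Proof. by apply/rowP => j; rewrite !mxE. Qed.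

Lemma Z1P A (w : 'rV[rat]_#|D|) :
  (w <= Z1 A)%MS = [&& w *m Psi1 G == 0, w *m Psi2 A == 0 & w *m Psi3 G == 0].
Proof. by rewrite /Z1 sub_kermx !mul_mx_row !row_mx_eq0. Qed.

Lemma vxPsi1 w j : (w *m Psi1 G) 0 j = vx w (dv j) + vx w (a (dv j)).
Proof.
rewrite !mxE.
transitivity (\sum_(e : D) vx w e * ((e == dv j)%:R + (e == a (dv j))%:R)).
  rewrite -(sumD (fun e => vx w e * ((e == dv j)%:R + (e == a (dv j))%:R))).
  by apply: eq_bigr => i _; rewrite vxE !mxE.
under eq_bigr => e _ do rewrite mulrDr.
by rewrite big_split !sum_pick.
Qed.

Lemma vxPsi2 A w j : (w *m Psi2 A) 0 j = vx w (dv j) * (dv j \notin A)%:R.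
Proof.
rewrite !mxE.
transitivity (\sum_(e : D) (vx w e * (dv j \notin A)%:R) * (e == dv j)%:R).
  rewrite -(sumD (fun e => (vx w e * (dv j \notin A)%:R) * (e == dv j)%:R)).
  apply: eq_bigr => i _; rewrite vxE !mxE.
  by case: (dv i == dv j); rewrite /= ?mulr1 ?mulr0.
by rewrite sum_pick.
Qed.

Lemma vxPsi3 w v : (w *m Psi3 G) 0 v = \sum_(d | rg_vert d == enum_val v) vx w d.
Proof.
rewrite !mxE [RHS]big_mkcond /=.
rewrite -(sumD (fun e => if rg_vert e == enum_val v then vx w e else 0)).
by apply: eq_bigr => i _; rewrite vxE !mxE; case: eqP; rewrite ?mulr1 ?mulr0.
Qed.

Lemma phi_inj : injective (@rg_phi G).
Proof. by move=> x y; rewrite /rg_phi => /perm_inj /perm_inj. Qed.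

Lemma rsF : connect_sym (frel (@rg_phi G)).
Proof. exact: fconnect_sym phi_inj. Qed.

Lemma memA (A : {set D}) : is_subgraph A -> forall x, (a x \in A) = (x \in A).
Proof.
move=> /eqP HA x; apply/idP/idP => H.
  by rewrite -HA -[x]rg_inv_invol imset_f.
by rewrite -HA imset_f.
Qed.

Lemma rsA (A : {set D}) : is_subgraph A -> connect_sym (drel A).
Proof.
move=> HA; apply: sym_connect_sym => x y; rewrite /drel fconnect_sym; last exact: phi_inj.
congr (_ || _); case: (eqVneq y (a x)) => [->|nyx].
  by rewrite memA // rg_inv_invol eqxx.
rewrite andbF; case: (eqVneq x (a y)) => [exy|]; last by rewrite andbF.
by move: nyx; rewrite exy rg_inv_invol eqxx.
Qed.

Lemma sub0 : is_subgraph (set0 : {set D}).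
Proof. by rewrite /is_subgraph imset0. Qed.

Lemma ind_cls_const r (rs : connect_sym r) z x y :
  r x y -> (x \in cls r z) = (y \in cls r z).
Proof.
move=> rxy; rewrite !inE; apply/idP/idP => H.
  exact: connect_trans H (connect1 rxy).
by apply: connect_trans H _; rewrite rs connect1.
Qed.

Local Notation F := (frel (@rg_phi G)).

Lemma SFT_Bmx : (Smx F *m Tm <= Bmx G)%MS.
Proof.
apply/row_subP => k; rewrite row_mul rowSmx; have [z ->] := enum_cls k.
by apply/(eq_row_sub (enum_rank z)); rewrite rowBmx /dv enum_rankK.
Qed.

Lemma Bmx_SFT : (Bmx G <= Smx F *m Tm)%MS.
Proof.
apply/row_subP => i; rewrite rowBmx; apply: submxMr.
apply/Smx_sub; first exact: rsF.
by move=> x y rxy; rewrite !vx_ind (ind_cls_const _ _ rxy) //; exact: rsF.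
Qed.

Lemma SA_SF (A : {set D}) : is_subgraph A -> (Smx (drel A) <= Smx F)%MS.
Proof.
move=> HA; apply/row_subP => k; apply/Smx_sub; first exact: rsF.
move=> x y Fxy; have /Smx_sub H := row_sub k (Smx (drel A)).
by apply: H; [exact: rsA | rewrite /drel connect1].
Qed.

Lemma capZB (A : {set D}) : is_subgraph A -> (Z1 A :&: Bmx G == Smx (drel A) *m Tm)%MS.
Proof.
move=> HA; apply/andP; split.
  apply/row_subP => i; set u := row i _.
  have uZ : (u <= Z1 A)%MS by apply: submx_trans (row_sub _ _) (capmxSl _ _).
  have uB : (u <= Bmx G)%MS by apply: submx_trans (row_sub _ _) (capmxSr _ _).
  have /submxP[c ec] := submx_trans uB Bmx_SFT.
  rewrite mulmxA in ec; set x := c *m Smx F in ec.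
  have /Smx_sub xF : (x <= Smx F)%MS by apply: submxMl.
  rewrite ec; apply: submxMr; apply/Smx_sub; first exact: rsA.
  move=> y z; rewrite /drel => /orP[Hf | /andP[yA /eqP ->]].
    by apply: const_connect Hf; apply: xF; exact: rsF.
  move: uZ; rewrite Z1P => /and3P[_ /eqP /rowP /(_ (enum_rank y)) H2 _].
  move: H2; rewrite vxPsi2 !mxE /dv enum_rankK yA mulr1 -/(vx u y) ec vxT.
  by move/eqP; rewrite subr_eq0 => /eqP.
rewrite sub_capmx; apply/andP; split; last first.
  exact: submx_trans (submxMr _ (SA_SF HA)) SFT_Bmx.
apply/row_subP => k; rewrite row_mul; set x := row k _.
have /Smx_sub Hx := row_sub k (Smx (drel A)); move: {Hx}(Hx (rsA HA)) => Hx.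
rewrite Z1P; apply/and3P; split; apply/eqP/rowP => j; rewrite [RHS]mxE.
- by rewrite vxPsi1 !vxT rg_inv_invol addrA subrK subrr.
- rewrite vxPsi2 vxT; case: (boolP (dv j \in A)) => jA; first by rewrite mulr0.
  rewrite (Hx (dv j) (a (dv j))) ?subrr ?mul0r //.
  by rewrite /drel jA eqxx orbT.
- rewrite vxPsi3; under eq_bigr => d _ do rewrite vxT.
  rewrite sumrB.
  have e1 : forall d, vx x (a d) = vx x (s d).
    move=> d; apply: Hx; rewrite /drel; apply/orP; left; apply: connect1.
    by rewrite /= /rg_phi rg_inv_invol.
  under [X in _ - X]eq_bigr => d _ do rewrite e1.
  rewrite [X in X - _](reindex_inj (h := fun d => s d) (@perm_inj _ s)) /=.
  under eq_bigl => d do rewrite rg_rot_vert.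
  by rewrite subrr.
Qed.

Lemma kH_eq (A : {set D}) : is_subgraph A ->
  (kH A + #|Cls (drel set0)| = #|Cls (drel A)|)%N.
Proof.
move=> HA; rewrite /kH (eqmx_rank (capZB HA)).
have E := mxrank_mul_ker (Smx (drel A)) Tm.
rewrite (Smx_rank (rsA HA)) in E.
transitivity (\rank (Smx (drel A) *m Tm) + \rank (Smx (drel A) :&: kermx Tm))%N;
  last exact: E.
congr (_ + _)%N.
rewrite -(Smx_rank (rsA sub0)); apply: esym; apply: eqmx_rank; apply/andP; split.
  apply/row_subP => i; set u := row i _.
  have /Smx_sub uS : (u <= Smx (drel A))%MS.
    by apply: submx_trans (row_sub _ _) (capmxSl _ _).
  have : (u <= kermx Tm)%MS by apply: submx_trans (row_sub _ _) (capmxSr _ _).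
  rewrite sub_kermx => /eqP uK.
  apply/Smx_sub; first exact: rsA sub0.
  move=> y z; rewrite /drel => /orP[Hf | /andP[_ /eqP ->]].
    by apply: (uS (rsA HA)); rewrite /drel Hf.
  have := congr1 (fun w => vx w y) uK; rewrite /= vxT.
  have -> : vx 0 y = 0 by rewrite /vx mxE.
  by move/eqP; rewrite subr_eq0 => /eqP.
rewrite sub_capmx; apply/andP; split; apply/row_subP => i.
  apply/Smx_sub; first exact: rsA.
  have /Smx_sub H := row_sub i (Smx (drel set0)); move: {H}(H (rsA sub0)) => H.
  move=> y z; rewrite /drel => /orP[Hf | /andP[_ e]]; apply: H.
    by rewrite /drel Hf.
  by rewrite /drel inE e orbT.
have /Smx_sub H := row_sub i (Smx (drel set0)); move: {H}(H (rsA sub0)) => H.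
rewrite sub_kermx; apply/eqP/rowP => j; rewrite [RHS]mxE -vxE vxT.
by rewrite (H (dv j) (a (dv j))) ?subrr // /drel inE eqxx orbT.
Qed.

End MX.

Section Comp.
Variable G : ribbon_graph.
Local Notation D := (rg_D G).
Local Notation V := (rg_V G).
Local Notation a := (@rg_inv G).
Local Notation s := (@rg_rot G).
Local Notation vert := (@rg_vert G).
Local Notation d0 := (drel (set0 : {set D})).
Local Notation vr := (vrel [set: D]).

Lemma same_vert_conn d d' : vert d = vert d' -> connect d0 d d'.
Proof.
move=> /rg_rot_trans H.
have := connect_map (h := id) (e := frel s) (e' := d0) _ H; apply.
move=> x y /= /eqP <-.
apply: (@connect_trans _ _ (a x)); apply: connect1.
  by rewrite /drel inE eqxx orbT.
by rewrite /drel; apply/orP; left; apply: connect1; rewrite /= /rg_phi rg_inv_invol.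
Qed.

Lemma vr_edge x : vr (vert x) (vert (a x)).
Proof. by apply/existsP; exists x; rewrite inE !eqxx. Qed.

Lemma d0_vr d d' : connect d0 d d' -> connect vr (vert d) (vert d').
Proof.
apply: connect_map => x y; rewrite /drel => /orP[Hf | /andP[_ /eqP ->]].
  apply: connect_map Hf => u w /= /eqP <-; apply: connect1.
  by rewrite /rg_phi rg_rot_vert vr_edge.
exact/connect1/vr_edge.
Qed.

Lemma vr_d0 d d' : connect vr (vert d) (vert d') -> connect d0 d d'.
Proof.
move=> /connectP[p]; elim: p d => [|z p IH] d /=.
  by move=> _ /esym; apply: same_vert_conn.
move=> /andP[/existsP[e /and3P[_ /eqP ed /eqP ez]] pz] ey.
apply: (@connect_trans _ _ e); first by apply: same_vert_conn.
apply: (@connect_trans _ _ (a e)); first by apply: connect1; rewrite /drel inE eqxx orbT.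
by apply: IH; rewrite ?ez.
Qed.

Lemma vr_sym : connect_sym vr.
Proof.
apply: sym_connect_sym => x y; apply/existsP/existsP => -[d /and3P[_ /eqP <- /eqP <-]];
  by exists (a d); rewrite inE rg_inv_invol !eqxx.
Qed.

Lemma nC_full : nC [set: D] = (ncomp d0 predT + n_isol [set: D])%N.
Proof.
rewrite /nC /ncomp /n_isol.
set iso := [set x : V | [forall d in [set: D], vert d != x]].
pose cV x := [set y | connect vr x y].
have isoC : forall x y, x \in iso -> connect vr x y -> y = x.
  move=> x y; rewrite inE => /forallP Hx /connectP[[|z p] /= ]; first by move=> _ ->.
  move=> /andP[/existsP[d /and3P[_ /eqP dx _]] _] _.
  by move: (Hx d); rewrite inE dx eqxx.
have E : [set cV x | x in predT] = [set cV (vert d) | d in predT] :|: [set cV x | x in iso].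
  apply/setP => K; rewrite inE; apply/imsetP/orP.
    move=> [x _ ->]; case: (boolP (x \in iso)) => xi; first by right; exact: imset_f.
    left; move: xi; rewrite inE => /forallPn[d]; rewrite inE /= negbK => /eqP <-.
    exact: imset_f.
  by move=> [/imsetP[d _ ->] | /imsetP[x _ ->]]; [exists (vert d) | exists x].
rewrite E cardsU.
have -> : [set cV (vert d) | d in predT] :&: [set cV x | x in iso] = set0.
  apply/setP => K; rewrite !inE; apply/andP => -[/imsetP[d _ ->] /imsetP[x xi ex]].
  have : vert d \in cV x by rewrite -ex inE connect0.
  rewrite inE => /(isoC _ _ xi) vdx.
  by move: xi; rewrite inE => /forallP/(_ d); rewrite inE vdx eqxx.
rewrite cards0 subn0; congr addn.
  apply: (card_imset_ker (f := fun d => cV (vert d))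
     (g := fun d => [set y | connect d0 d y])) => d d' _ _.
  rewrite /cV !clsE; [| exact: (@rsA G set0 (@sub0 G)) | exact: vr_sym].
  by apply/idP/idP; [exact: vr_d0 | exact: d0_vr].
apply: card_in_imset => x1 x2 x1i x2i e.
have : x2 \in cV x1 by rewrite e inE connect0.
by rewrite inE => /(isoC _ _ x1i).
Qed.

End Comp.

Lemma iter_inj (T : Type) (f : T -> T) n : injective f -> injective (iter n f).
Proof. by move=> fi; elim: n => [|n IH] x y //= /fi /IH. Qed.

Lemma porbits_split (T : finType) (p : {perm T}) (B : {set T}) :
  (forall x, x \notin B -> p x = x) -> (forall x, x \in B -> p x \in B) ->
  #|porbits p| = (#|[set porbit p x | x in B]| + #|~: B|)%N.
Proof.
move=> pfix stab.
have inB : forall x y, x \in B -> y \in porbit p x -> y \in B.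
  move=> x y xB /porbitP[i ->]; rewrite permX; elim: i => //= i IH; exact: stab.
have outB : forall x, x \notin B -> porbit p x = [set x].
  move=> x xB; apply/setP => y; rewrite inE; apply/porbitP/eqP => [[i ->]|->].
    by rewrite permX_fix // pfix.
  by exists 0; rewrite expg0 perm1.
rewrite /porbits.
have -> : [set porbit p x | x in T] = [set porbit p x | x in B] :|: [set porbit p x | x in ~: B].
  rewrite -imsetU setUCr; apply/setP => K; apply/imsetP/imsetP => -[x _ ->]; by exists x.
rewrite cardsU.
have -> : [set porbit p x | x in B] :&: [set porbit p x | x in ~: B] = set0.
  apply/setP => K; rewrite !inE; apply/andP => -[/imsetP[x xB ->] /imsetP[y]].
  rewrite inE => yB e.
  have : y \in porbit p x by rewrite e porbit_id.
  by move/(inB _ _ xB); rewrite (negbTE yB).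
rewrite cards0 subn0; congr addn.
rewrite (eq_in_imset (g := fun x => [set x])); first by rewrite card_imset //; exact: set1_inj.
by move=> x; rewrite inE; exact: outB.
Qed.

Section Par.
Variable G : ribbon_graph.
Local Notation D := (rg_D G).
Local Notation V := (rg_V G).
Local Notation a := (@rg_inv G).
Local Notation s := (@rg_rot G).
Local Notation vert := (@rg_vert G).
Variable A : {set D}.
Hypothesis HA : is_subgraph A.

Definition stepA d := (find (fun k => iter k.+1 s d \in A) (iota 0 #|D|)).+1.

Lemma nextAE d : nextA A d = iter (stepA d) s d.
Proof. by []. Qed.

Lemma nextA_spec d : d \in A ->
  [/\ 0 < stepA d, nextA A d \in A & forall i, 0 < i < stepA d -> iter i s d \notin A].
Proof.
move=> dA; set P := (fun k => iter k.+1 s d \in A).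
have hasP : has P (iota 0 #|D|).
  apply/hasP; exists (fingraph.order s d).-1.
    by rewrite mem_iota /= add0n orderSpred; exact: max_card.
  by rewrite /P orderSpred iter_order //; exact: perm_inj.
have fl : find P (iota 0 #|D|) < #|D| by rewrite -[X in _ < X](size_iota 0) -has_find.
split => //; last first.
  case=> // i /andP[_ ilt]; rewrite ltnS in ilt.
  have := before_find 0 ilt; rewrite nth_iota ?add0n; last exact: ltn_trans ilt fl.
  by rewrite /P => ->.
have := nth_find 0 hasP; rewrite nth_iota // add0n.
Qed.

Lemma nextA_inj : {in A &, injective (nextA A)}.
Proof.
have key : forall d1 d2, d1 \in A -> d2 \in A -> stepA d1 <= stepA d2 ->
    nextA A d1 = nextA A d2 -> d1 = d2.
  move=> d1 d2 A1 A2 le12.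
  have [j1 _ _] := nextA_spec A1; have [_ _ H2] := nextA_spec A2.
  rewrite !nextAE -(subnKC le12) iterD => /(@iter_inj _ s _ (@perm_inj _ s)) e.
  move: H2 e; case E: (stepA d2 - stepA d1) => [|k] H2 e; first exact: e.
  have := H2 k.+1; rewrite -e A1 /=.
  move=> H; suff: false by []; apply: H.
  by move: j1 le12 E; lia.
move=> d1 d2 A1 A2; case: (leqP (stepA d1) (stepA d2)) => le; first exact: key.
by move/esym; move/(key _ _ A2 A1 (ltnW le)) => ->.
Qed.

Definition sAf d := if d \in A then nextA A d else d.
Lemma sAf_inj : injective sAf.
Proof.
move=> x y; rewrite /sAf; case: (boolP (x \in A)) => xA; case: (boolP (y \in A)) => yA //.
- exact: nextA_inj.
- by move=> e; move: yA; rewrite -e; have [_ -> _] := nextA_spec xA.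
- by move=> e; move: xA; rewrite e; have [_ -> _] := nextA_spec yA.
Qed.
Definition sA := perm sAf_inj.

Definition aAf d := if d \in A then a d else d.
Lemma aAf_inj : injective aAf.
Proof.
move=> x y; rewrite /aAf; case: (boolP (x \in A)) => xA; case: (boolP (y \in A)) => yA //.
- exact: perm_inj.
- by move=> e; move: yA; rewrite -e (memA HA) xA.
- by move=> e; move: xA; rewrite e (memA HA) yA.
Qed.
Definition aA := perm aAf_inj.
Definition phA := (aA * sA)%g.

Lemma sAE x : sA x = if x \in A then nextA A x else x.
Proof. by rewrite permE. Qed.
Lemma aAE x : aA x = if x \in A then a x else x.
Proof. by rewrite permE. Qed.

Lemma phAE x : x \in A -> phA x = phiA A x.
Proof. by move=> xA; rewrite permM aAE xA sAE (memA HA) // xA. Qed.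

Lemma sA_stab x : x \in A -> sA x \in A.
Proof. by move=> xA; rewrite sAE xA; have [_ -> _] := nextA_spec xA. Qed.
Lemma aA_stab x : x \in A -> aA x \in A.
Proof. by move=> xA; rewrite aAE xA (memA HA). Qed.
Lemma phA_stab x : x \in A -> phA x \in A.
Proof. by move=> xA; rewrite permM; apply/sA_stab/aA_stab. Qed.
Lemma sA_fix x : x \notin A -> sA x = x.
Proof. by move=> xA; rewrite sAE (negbTE xA). Qed.
Lemma aA_fix x : x \notin A -> aA x = x.
Proof. by move=> xA; rewrite aAE (negbTE xA). Qed.
Lemma phA_fix x : x \notin A -> phA x = x.
Proof. by move=> xA; rewrite permM aA_fix // sA_fix. Qed.

Lemma vert_iter n d : vert (iter n s d) = vert d.
Proof. by elim: n => //= n IH; rewrite rg_rot_vert. Qed.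

Lemma sA_vert x : vert (sA x) = vert x.
Proof. by rewrite sAE; case: (x \in A); rewrite // nextAE vert_iter. Qed.

Lemma iter_porbit_sA n m x : m < n -> x \in A -> iter m s x \in A ->
  iter m s x \in porbit sA x.
Proof.
elim: n m x => // n IH m x lt xA mA.
have [j0 nA Hs] := nextA_spec xA.
case: (ltnP m (stepA x)) => mj.
  case: m {lt} mA mj => [|m] mA mj; first exact: porbit_id.
  by move: mA; rewrite (negbTE (Hs m.+1 _)) //= mj.
have E : iter m s x = iter (m - stepA x) s (sA x).
  by rewrite sAE xA nextAE -iterD subnK.
rewrite E -(porbit_perm _ 1) expg1; apply: IH.
- by move: j0 mj lt; lia.
- exact: sA_stab.
- by rewrite -E.
Qed.

Lemma sA_orbit x y : x \in A -> y \in A -> (y \in porbit sA x) = (vert y == vert x).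
Proof.
move=> xA yA; apply/idP/eqP.
  move=> /porbitP[i ->]; rewrite permX; elim: i => //= i IH.
  by rewrite sA_vert.
move=> /esym /rg_rot_trans H; rewrite -(iter_findex H).
apply: (@iter_porbit_sA (findex s x y).+1) => //; by rewrite iter_findex.
Qed.

Lemma card_orb_sA : #|[set porbit sA x | x in A]| = #|[set vert x | x in A]|.
Proof.
apply: card_imset_ker => x y xA yA; rewrite eq_porbit_mem sA_orbit //.
Qed.

Lemma aA_orbit x : x \in A -> porbit aA x = [set x; a x].
Proof.
move=> xA; apply/setP => y; apply/porbitP/idP.
  move=> [i ->]; rewrite permX; elim: i => [|i IH] /=; first by rewrite !inE eqxx.
  move: IH; rewrite !inE => /orP[/eqP -> | /eqP ->].
    by rewrite aAE xA eqxx orbT.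
  by rewrite aAE (memA HA) xA rg_inv_invol eqxx.
rewrite !inE => /orP[/eqP -> | /eqP ->]; [exists 0 | exists 1].
  by rewrite expg0 perm1.
by rewrite expg1 aAE xA.
Qed.

Lemma card_orb_aA : #|[set porbit aA x | x in A]| = nE A.
Proof.
rewrite /nE; apply: eq_card => K; apply/imsetP/imsetP => -[x xA ->];
  exists x => //; by rewrite aA_orbit.
Qed.

Lemma pairE d z : z \in [set d; a d] -> [set d; a d] = [set z; a z].
Proof.
by rewrite !inE => /orP[/eqP->|/eqP->] //; rewrite setUC rg_inv_invol.
Qed.

Lemma cardA2 : #|A| = (nE A).*2.
Proof.
set P := [set [set d; a d] | d in A].
have part : partition P A.
  apply/and3P; split.
  - apply/eqP/setP => y; apply/bigcupP/idP => [[K /imsetP[d dA ->]] | yA].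
      by rewrite !inE => /orP[/eqP->|/eqP->] //; rewrite (memA HA).
    by exists [set y; a y]; [exact: imset_f | rewrite !inE eqxx].
  - apply/trivIsetP => K1 K2 /imsetP[d1 _ ->] /imsetP[d2 _ ->] ne.
    rewrite -setI_eq0; apply/eqP/setP => z; rewrite in_setI [RHS]inE.
    apply/andP => -[h1 h2]; move: ne.
    by rewrite (pairE h1) (pairE h2) eqxx.
  - by apply/imsetP => -[d _ /setP/(_ d)]; rewrite !inE eqxx.
rewrite (card_partition part) (eq_bigr (fun _ => 2)).
  by rewrite sum_nat_const muln2.
move=> K /imsetP[d _ ->]; rewrite cards2 eq_sym.
by have := rg_inv_nofix d => ->.
Qed.

Lemma iter_phA n x : x \in A -> iter n phA x = iter n (phiA A) x /\ iter n phA x \in A.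
Proof.
move=> xA; elim: n => [|n [IH1 IH2]] //=.
by rewrite phAE // IH1; split => //; rewrite -IH1 -phAE // phA_stab.
Qed.

Lemma phA_orbit x : x \in A -> porbit phA x = [set y | connect (frel (phiA A)) x y].
Proof.
move=> xA; apply/setP => y; rewrite inE; apply/porbitP/idP.
  by move=> [i ->]; rewrite permX (iter_phA i xA).1; exact: fconnect_iter.
by move=> H; exists (findex (phiA A) x y); rewrite permX (iter_phA _ xA).1 iter_findex.
Qed.

Lemma card_orb_phA : #|[set porbit phA x | x in A]| = ncomp (frel (phiA A)) (mem A).
Proof.
rewrite /ncomp; apply: eq_card => K; apply/imsetP/imsetP => -[x xA ->];
  exists x => //; by rewrite phA_orbit.
Qed.

Lemma parity : odd (ncomp (frel (phiA A)) (mem A)) = odd (nE A) (+) odd #|[set vert x | x in A]|.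
Proof.
have := odd_permM aA sA; rewrite -/phA /odd_perm.
rewrite !(@porbits_split _ _ A) //; try (by apply: phA_fix); try (by apply: phA_stab);
  try (by apply: aA_fix); try (by apply: aA_stab); try (by apply: sA_fix); try (by apply: sA_stab).
rewrite card_orb_phA card_orb_aA card_orb_sA -(cardsC A) cardA2 !oddD odd_double.
by case: (odd _); case: (odd _); case: (odd _); case: (odd _).
Qed.

End Par.

Lemma exprzMf (F : fieldType) (x y : F) (n : int) : ((x * y) ^ n = x ^ n * y ^ n)%R.
Proof. by case: n => m; rewrite /exprz ?exprMn ?invfM. Qed.

Section Fin.
Variable G : ribbon_graph.
Local Notation D := (rg_D G).
Local Notation V := (rg_V G).
Local Notation vert := (@rg_vert G).

Lemma nV_split (A : {set D}) : #|V| = (#|[set vert x | x in A]| + n_isol A)%N.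
Proof.
rewrite /n_isol -(cardsC [set vert x | x in A]); congr addn; apply: eq_card => x.
rewrite !inE; apply/negP/forallP => [H d | H /imsetP[d dA ex]].
  by apply/implyP => dA; apply/eqP => e; apply: H; apply/imsetP; exists d.
by move: (H d); rewrite dA ex eqxx.
Qed.

Lemma sH_even (A : {set D}) : is_subgraph A -> exists q : int, sH A = (2 * q)%R.
Proof.
move=> HA; have Hp := parity HA.
have hV := nV_split A.
set f := ncomp _ _ in Hp; set vA := #|_| in Hp hV.
have ev : odd (f + vA + nE A) = false.
  by rewrite !oddD Hp; case: (odd _); case: (odd _).
have hh := halfK (f + vA + nE A); rewrite ev subn0 in hh.
exists ((nC A)%:Z - (n_isol A)%:Z + (nE A)%:Z - ((f + vA + nE A)./2)%:Z)%R.
rewrite /sH /bc /nV -/f; rewrite -muln2 in hh; lia.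
Qed.

End Fin.

Local Open Scope ring_scope.

Lemma subT (G : ribbon_graph) : is_subgraph [set: rg_D G].
Proof.
apply/eqP/setP => x; rewrite inE; apply/imsetP; exists (@rg_inv G x); rewrite ?inE //.
by rewrite rg_inv_invol.
Qed.

Theorem lemma4p1 (G : ribbon_graph) (R : realFieldType) (X Y Z : R) :
  Y != 0 ->
  BR G X Y Z = Y ^ genus_Sigma G * Ppoly G (X - 1) Y (Y * Z ^+ 2) Y^-1.
Proof.
move=> Y0.
have [qG hG] := sH_even (subT G).
have gE : genus_Sigma G = qG by rewrite /genus_Sigma hG mulKz.
rewrite /BR /Ppoly mulr_sumr; apply: eq_bigr => A HA.
have [qA hA] := sH_even HA.
have hk : (kH A + ncomp (drel set0) predT = ncomp (drel A) predT)%N := kH_eq HA.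
have hc := nC_full G.
set pA : int := (nCperp A)%:Z + qG - (nC [set: rg_D G])%:Z + qA - (nC A)%:Z
   + (nV G)%:Z - (nE A)%:Z.
have hp : sperp A = 2 * pA.
  move: hA hG; rewrite /sperp /pA /sH; lia.
rewrite gE hA hp !mulKz //.
have e1 : rk [set: rg_D G] - rk A = (nC A)%:Z - (nC [set: rg_D G])%:Z.
  by rewrite /rk; lia.
have e2 : (nC A)%:Z - (bc A)%:Z + nul A = 2 * qA.
  by move: hA; rewrite /sH /nul /rk; lia.
have e3 : nul A = qG + (kH A)%:Z + qA + - pA.
  move: hA hG hk hc; rewrite /sH /nul /rk /pA /nCperp; lia.
rewrite e1 e2 e3 !(expfzDr _ _ Y0) exprzMf exprz_inv -exprz_exp exprnP.
have key : forall a b c d e f : R, a * (b * c * d * e) * f = b * (a * c * (d * f) * e).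
  by move=> *; ring.
exact: key.
Qed.
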